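(* Let $I_S>0$ and define the monopoly SP's net revenue as a function of the small-cell deployment density $\lambda\ge 0$ by $$S(\lambda)=\begin{cases}(BR_0)^{1-\alpha}(N_m+N_f)^{\alpha}-I_S\lambda, & 0\le\lambda\le 1,\\ (BR_0)^{1-\alpha}\big(N_m+\lambda^{\frac1\alpha-1}N_f\big)^{\alpha}-I_S\lambda, & \lambda>1.\end{cases}$$ Then every maximizer $\lambda^{\mathrm{rev}}$ of $S$ over $[0,\infty)$ satisfies either $\lambda^{\mathrm{rev}}=0$ or $\lambda^{\mathrm{rev}}=\lambda^*$, where $\lambda^*>1$ solves $$N_f(1-\alpha)(BR_0)^{1-\alpha}(\lambda^* )^{\frac1\alpha-2}\big(N_f(\lambda^* )^{\frac1\alpha-1}+N_m\big)^{\alpha-1}=I_S. \qquad (P1)$$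
   Context: Parameters: $\alpha\in(0,1)$; densities $N_m>0$ of mobile users and $N_f>0$ of fixed users; spectral efficiency $R_0>0$; SP bandwidth $B>0$; investment cost $I_S>0$ per unit small-cell density (the SP pays $I_S\lambda$ to deploy density $\lambda$). Users have utility $u(r)=\frac{r^{1-\alpha}}{1-\alpha}$. The function $S(\lambda)$ is the SP's revenue minus investment cost when, for a given density $\lambda$, it uses its revenue-optimal bandwidth split and market-clearing prices: for $\lambda\le 1$ all bandwidth goes to macro-cells; for $\lambda>1$ it allocates $B_S=\frac{\epsilon N_fB}{\epsilon N_f+N_m}$, $B_M=\frac{N_mB}{\epsilon N_f+N_m}$ with $\epsilon=\lambda^{1/\alpha-1}$. *)

(* Defs.v *)
From Stdlib Require Import Reals.
Open Scope R_scope.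

Definition S_rev (alpha Nm Nf R0 B IS lam : R) : R :=
  if Rle_dec lam 1 then
    Rpower (B * R0) (1 - alpha) * Rpower (Nm + Nf) alpha - IS * lam
  else
    Rpower (B * R0) (1 - alpha)
      * Rpower (Nm + Rpower lam (1 / alpha - 1) * Nf) alpha - IS * lam.

Definition P1 (alpha Nm Nf R0 B IS lam : R) : Prop :=
  Nf * (1 - alpha) * Rpower (B * R0) (1 - alpha) * Rpower lam (1 / alpha - 2)
    * Rpower (Nf * Rpower lam (1 / alpha - 1) + Nm) (alpha - 1) = IS.

Definition is_maximizer (f : R -> R) (lam : R) : Prop :=
  0 <= lam /\ forall x, 0 <= x -> f x <= f lam.

(* Main.v *)
Require Import Defs.
From Stdlib Require Import Reals Lra.
Open Scope R_scope.

Lemma Rpower_gt0 x y : 0 < Rpower x y.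
Proof. unfold Rpower; apply exp_pos. Qed.

Theorem theorem4 (alpha Nm Nf R0 B IS : R)
  (Halpha0 : 0 < alpha) (Halpha1 : alpha < 1)
  (HNm : 0 < Nm) (HNf : 0 < Nf) (HR0 : 0 < R0) (HB : 0 < B) (HIS : 0 < IS)
  (lam : R) :
  is_maximizer (S_rev alpha Nm Nf R0 B IS) lam ->
  lam = 0 \/ (1 < lam /\ P1 alpha Nm Nf R0 B IS lam).
Proof.
  intros [H0 Hmax].
  destruct (Rle_dec lam 0) as [Hl0|Hl0]; [left; lra|right].
  destruct (Rle_dec lam 1) as [Hl1|Hl1].
  { exfalso. specialize (Hmax 0 (Rle_refl 0)). unfold S_rev in Hmax.
    destruct (Rle_dec 0 1); [|lra]. destruct (Rle_dec lam 1); [|lra].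
    assert (0 < IS * lam) by (apply Rmult_lt_0_compat; lra). lra. }
  split; [lra|].
  set (e := 1 / alpha - 1).
  set (C := Rpower (B * R0) (1 - alpha)).
  set (h := fun x => Nm + Rpower x e * Nf).
  set (g := fun x => C * Rpower (h x) alpha - IS * x).
  assert (Hlam : 0 < lam) by lra.
  assert (Hh : derivable_pt_lim h lam (e * Rpower lam (e - 1) * Nf)).
  { replace (e * Rpower lam (e - 1) * Nf) with
      (0 + (e * Rpower lam (e - 1) * 0 + Rpower lam e * 0 + 0 * Nf + (e * Rpower lam (e - 1)) * Nf)) by ring.
    apply (derivable_pt_lim_plus (fct_cte Nm) (fun x => Rpower x e * Nf)).
    - apply derivable_pt_lim_const.
    - replace (e * Rpower lam (e - 1) * 0 + Rpower lam e * 0 + 0 * Nf + e * Rpower lam (e - 1) * Nf)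
        with (e * Rpower lam (e - 1) * fct_cte Nf lam + Rpower lam e * 0)
        by (unfold fct_cte; ring).
      apply (derivable_pt_lim_mult (fun x => Rpower x e) (fct_cte Nf)).
      + apply derivable_pt_lim_power; exact Hlam.
      + apply derivable_pt_lim_const. }
  assert (Hhpos : 0 < h lam).
  { unfold h. pose proof (Rpower_gt0 lam e). assert (0 < Rpower lam e * Nf) by (apply Rmult_lt_0_compat; lra). lra. }
  set (l := C * (alpha * Rpower (h lam) (alpha - 1) * (e * Rpower lam (e - 1) * Nf)) - IS * 1).
  assert (Hg : derivable_pt_lim g lam l).
  { unfold l.
    apply (derivable_pt_lim_minus (fun x => C * Rpower (h x) alpha) (fun x => IS * x)).
    - apply (derivable_pt_lim_scal (fun x => Rpower (h x) alpha) C).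
      apply (derivable_pt_lim_comp h (fun y => Rpower y alpha)).
      + exact Hh.
      + apply derivable_pt_lim_power; exact Hhpos.
    - apply (derivable_pt_lim_scal id IS). apply derivable_pt_lim_id. }
  assert (Hd : derive_pt g lam (exist _ l Hg) = 0).
  { apply (deriv_maximum g 1 (lam + 1)); try lra.
    intros x Hx1 Hx2.
    assert (Hx : 0 <= x) by lra.
    specialize (Hmax x Hx). unfold S_rev in Hmax.
    destruct (Rle_dec x 1); [lra|]. destruct (Rle_dec lam 1); [lra|].
    unfold g, h, C, e. exact Hmax. }
  simpl in Hd. unfold l in Hd.
  unfold P1. fold C.
  replace (1 / alpha - 2) with (e - 1) by (unfold e; ring).
  replace (Nf * Rpower lam (1 / alpha - 1) + Nm) with (h lam) by (unfold h, e; ring).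
  assert (Hae : alpha * e = 1 - alpha) by (unfold e; field; lra).
  rewrite <- Hae. lra.
Qed.
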